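(* Let $M\ge1$, let $a>\log M+3$, and let $X\sim\mathcal{N}(\mu^*,1)$ on $\mathbb{R}$ with $\mu^*\ge a$. Let $\mu_1,\dots,\mu_M\in\mathbb{R}$ be current centers and let $i\in[M]$ with $\mu_i\ge0$. Then $$\mathbb{E}[w_i(X)X]\ge0.$$ If moreover $\mu^*\le3a$ and $0\le\mu_i\le4a$, then $$\mathbb{E}[w_i(X)X]\ge\frac{a}{5M}e^{-9a^2/2}.$$
   Context: For current centers $\mu_1,\dots,\mu_M\in\mathbb{R}$, the membership weights are $$w_i(x)=\frac{e^{-(x-\mu_i)^2/2}}{\sum_{j=1}^M e^{-(x-\mu_j)^2/2}}.$$ *)

(* Defs.v *)
From Stdlib Require Import Reals Lra Lia.
Open Scope R_scope.

Definition gker (m x : R) : R := exp (- (x - m) ^ 2 / 2).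

(* Membership weight w_i(x) for centers mu_0,...,mu_{M-1}
   (0-indexed: the paper's mu_1..mu_M are mu 0 .. mu (M-1)). *)
Definition weight (M : nat) (mu : nat -> R) (i : nat) (x : R) : R :=
  gker (mu i) x / sum_f_R0 (fun j => gker (mu j) x) (M - 1).

Definition gauss_density (m x : R) : R := gker m x / sqrt (2 * PI).

(* Improper Riemann integral over R: l is the limit of the integral over
   [-A, B] as A, B -> +infinity independently (integrability on each
   such interval is part of the requirement). *)
Definition improper_int (f : R -> R) (l : R) : Prop :=
  forall eps, 0 < eps -> exists T0 : R, forall A B : R,
    T0 <= A -> T0 <= B ->
    exists pr : Riemann_integrable f (- A) B, Rabs (RiemannInt pr - l) < eps.

(* E[w_i(X) X] for X ~ N(mustar, 1): the integrand. *)
Definition integrand (M : nat) (mu : nat -> R) (i : nat) (mustar : R) (x : R) : R :=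
  weight M mu i x * x * gauss_density mustar x.

(* Main.v *)
Require Import Defs.
From Stdlib Require Import Reals Lra Lia Psatz Classical.
From Coquelicot Require Import Coquelicot.
Open Scope R_scope.

Lemma expl (x y : R) : x <= y -> exp x <= exp y.
Proof. intros H. destruct (Rle_lt_or_eq_dec _ _ H) as [H1|H1].
  left; apply exp_increasing; auto. rewrite H1; lra. Qed.

Lemma gker_pos m x : 0 < gker m x.
Proof. unfold gker; apply exp_pos. Qed.

Lemma gker_le1 m x : gker m x <= 1.
Proof. unfold gker. rewrite <- exp_0. apply expl. pose proof (pow2_ge_0 (x-m)). lra. Qed.

Lemma sum_term (h : nat -> R) N k : (forall j, 0 <= h j) -> (k <= N)%nat -> h k <= sum_f_R0 h N.
Proof.
  intros Hp; induction N; intros Hk.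
  - replace k with 0%nat by lia. simpl; lra.
  - simpl. destruct (Nat.eq_dec k (S N)) as [->|Hne].
    + assert (0 <= sum_f_R0 h N) by (apply cond_pos_sum; auto). lra.
    + assert (h k <= sum_f_R0 h N) by (apply IHN; lia). specialize (Hp (S N)). lra.
Qed.

Definition Ssum M (mu : nat -> R) x := sum_f_R0 (fun j => gker (mu j) x) (M - 1).

Lemma S_ge M mu i x : (i < M)%nat -> gker (mu i) x <= Ssum M mu x.
Proof. intros H. unfold Ssum. apply (sum_term (fun j => gker (mu j) x)).
  intros; left; apply gker_pos. lia. Qed.

Lemma S_le M mu x : (1 <= M)%nat -> Ssum M mu x <= INR M.
Proof. intros H. unfold Ssum. eapply Rle_trans.
  apply (sum_Rle _ (fun _ => 1)). intros; apply gker_le1.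
  rewrite sum_cte. replace (S (M-1)) with M by lia. lra. Qed.

Lemma weight_eq M mu i x : weight M mu i x = gker (mu i) x / Ssum M mu x.
Proof. reflexivity. Qed.

Lemma weight_bounds M mu i x : (i < M)%nat ->
  0 < weight M mu i x /\ weight M mu i x <= 1.
Proof. intros H. rewrite weight_eq. pose proof (S_ge M mu i x H). pose proof (gker_pos (mu i) x).
  split. apply Rdiv_lt_0_compat; lra.
  apply Rmult_le_reg_r with (Ssum M mu x). lra. unfold Rdiv. rewrite Rmult_assoc, Rinv_l. lra. lra. Qed.

Lemma weight_lower M mu i x : (1 <= M)%nat -> (i < M)%nat ->
  gker (mu i) x / INR M <= weight M mu i x.
Proof. intros H1 H2. rewrite weight_eq. pose proof (S_ge M mu i x H2). pose proof (gker_pos (mu i) x).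
  pose proof (S_le M mu x H1).
  unfold Rdiv. apply Rmult_le_compat_l. lra. apply Rinv_le_contravar; lra. Qed.

Lemma term_ineq mj mi x y : 0 <= mi -> x <= 0 -> 0 <= y ->
  gker mj y * gker mi x <= gker mj x * gker mi y + exp (y^2/2) * gker mi x * gker mi y.
Proof.
  intros Hmi Hx Hy. pose proof (gker_pos mi x). pose proof (gker_pos mi y). pose proof (gker_pos mj x).
  pose proof (exp_pos (y^2/2)).
  destruct (Rle_or_lt mj mi) as [Hc|Hc].
  - assert (gker mj y * gker mi x <= gker mj x * gker mi y).
    { unfold gker. rewrite <- !exp_plus. apply expl.
      assert (0 <= (y-x)*(mi-mj)) by (apply Rmult_le_pos; lra). nra. }
    assert (0 <= exp (y^2/2) * gker mi x * gker mi y) by (repeat apply Rmult_le_pos; lra). lra.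
  - assert (gker mj y <= exp (y^2/2) * gker mi y).
    { unfold gker. rewrite <- !exp_plus. apply expl.
      assert (0 <= 2*(mj-mi)*mi) by (apply Rmult_le_pos; lra). pose proof (pow2_ge_0 (y - (mj-mi))). nra. }
    assert (gker mj y * gker mi x <= exp (y^2/2) * gker mi y * gker mi x) by (apply Rmult_le_compat_r; lra).
    assert (0 <= gker mj x * gker mi y) by (apply Rmult_le_pos; lra). lra.
Qed.

Lemma W2 M mu i x y : (1 <= M)%nat -> (i < M)%nat -> 0 <= mu i -> x <= 0 -> 0 <= y ->
  weight M mu i x <= (INR M + 1) * exp (y^2/2) * weight M mu i y.
Proof.
  intros H1 H2 Hmu Hx Hy. rewrite !weight_eq.
  set (gx := gker (mu i) x). set (gy := gker (mu i) y). set (e := exp (y^2/2)).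
  assert (Hgx : 0 < gx) by apply gker_pos. assert (Hgy : 0 < gy) by apply gker_pos.
  assert (HSx : gx <= Ssum M mu x) by (apply S_ge; auto).
  assert (HSy : gy <= Ssum M mu y) by (apply S_ge; auto).
  assert (He : 1 <= e). { unfold e. rewrite <- exp_0. apply expl. pose proof (pow2_ge_0 y). lra. }
  assert (Hk : gx * Ssum M mu y <= gy * Ssum M mu x + e * gx * gy * INR M).
  { unfold Ssum. rewrite scal_sum, scal_sum.
    eapply Rle_trans. apply (sum_Rle _ (fun j => gker (mu j) x * gy + e * gx * gy)).
    intros n _. unfold gx, gy, e. apply term_ineq; auto.
    rewrite plus_sum, sum_cte. replace (S (M-1)) with M by lia. lra. }
  assert (HM : 1 <= INR M) by (apply (le_INR 1); auto).
  assert (Hk2 : gx * Ssum M mu y <= (INR M + 1) * e * gy * Ssum M mu x).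
  { assert (e * gx * gy * INR M <= e * Ssum M mu x * gy * INR M).
    { apply Rmult_le_compat_r. lra. apply Rmult_le_compat_r. lra. apply Rmult_le_compat_l; lra. }
    assert (gy * Ssum M mu x <= e * gy * Ssum M mu x).
    { rewrite <- (Rmult_1_l (gy * _)) at 1. rewrite Rmult_assoc. apply Rmult_le_compat_r.
      apply Rmult_le_pos; lra. lra. }
    nra. }
  apply Rmult_le_reg_r with (Ssum M mu x * Ssum M mu y). apply Rmult_lt_0_compat; lra.
  replace (gx / Ssum M mu x * (Ssum M mu x * Ssum M mu y)) with (gx * Ssum M mu y) by (field; lra).
  replace ((INR M + 1) * e * (gy / Ssum M mu y) * (Ssum M mu x * Ssum M mu y)) with
    ((INR M + 1) * e * gy * Ssum M mu x) by (field; lra).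
  exact Hk2.
Qed.

Lemma cont_gker m x : continuity_pt (gker m) x.
Proof. unfold gker. apply derivable_continuous_pt. 
  change (fun x => exp (- (x - m) ^ 2 / 2)) with (comp exp (fun x => - (x - m) ^ 2 / 2)).
  apply derivable_pt_comp. unfold Rdiv. reg. apply derivable_pt_exp. Qed.

Lemma cont_sum (mu : nat -> R) n x : continuity_pt (fun x => sum_f_R0 (fun j => gker (mu j) x) n) x.
Proof.
  induction n; simpl.
  - apply cont_gker.
  - apply (continuity_pt_plus (fun x => sum_f_R0 (fun j => gker (mu j) x) n) (fun x => gker (mu (S n)) x)). exact IHn. apply cont_gker.
Qed.

Lemma cont_f M mu i m x : (i < M)%nat -> continuous (integrand M mu i m) x.
Proof.
  intros H. apply continuity_pt_filterlim. unfold integrand, weight, gauss_density.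
  apply (continuity_pt_mult (fun x => gker (mu i) x / sum_f_R0 (fun j : nat => gker (mu j) x) (M - 1) * x) (fun x => gker m x / sqrt (2*PI))).
  apply (continuity_pt_mult (fun x => gker (mu i) x / sum_f_R0 (fun j : nat => gker (mu j) x) (M - 1)) (fun x => x)).
  apply (continuity_pt_div (gker (mu i)) (fun x => sum_f_R0 (fun j : nat => gker (mu j) x) (M - 1))).
  apply cont_gker. apply cont_sum. pose proof (S_ge M mu i x H). pose proof (gker_pos (mu i) x). unfold Ssum in *. lra.
  apply continuity_pt_id.
  apply (continuity_pt_div (gker m) (fun _ => sqrt (2*PI))). apply cont_gker. apply continuity_pt_const. intros ? ?; auto.
  apply Rgt_not_eq. apply sqrt_lt_R0. pose proof PI_RGT_0. lra.
Qed.

Lemma exRI_f M mu i m a b : (i < M)%nat -> ex_RInt (integrand M mu i m) a b.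
Proof. intros H. apply (@ex_RInt_continuous R_CompleteNormedModule). intros; apply cont_f; auto. Qed.

Definition sq := sqrt (2 * PI).
Lemma sq_pos : 0 < sq.
Proof. unfold sq. apply sqrt_lt_R0. pose proof PI_RGT_0. lra. Qed.
Lemma sq_le3 : sq <= 3.
Proof. unfold sq. rewrite <- (sqrt_square 3) by lra. apply sqrt_le_1. pose proof PI_RGT_0; lra. lra.
  pose proof PI_4. lra. Qed.

Lemma pos3 a b c : 0 <= a -> 0 <= b -> 0 <= c -> 0 <= a * b * c.
Proof. intros. apply Rmult_le_pos; [apply Rmult_le_pos|]; auto. Qed.

Lemma f_eq M mu i m x : integrand M mu i m x = weight M mu i x * x * gker m x / sq.
Proof. unfold integrand, gauss_density, sq. field. pose proof sq_pos. unfold sq in H. lra. Qed.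

Lemma f_nonneg M mu i m x : (i < M)%nat -> 0 <= x -> 0 <= integrand M mu i m x.
Proof. intros H Hx. rewrite f_eq. pose proof (weight_bounds M mu i x H). pose proof (gker_pos m x).
  pose proof sq_pos. unfold Rdiv. apply Rmult_le_pos. apply pos3; lra.
  left; apply Rinv_0_lt_compat; lra. Qed.

Lemma f_nonpos M mu i m x : (i < M)%nat -> x <= 0 -> integrand M mu i m x <= 0.
Proof. intros H Hx. rewrite f_eq. pose proof (weight_bounds M mu i x H). pose proof (gker_pos m x).
  pose proof sq_pos. assert (0 <= weight M mu i x * (- x) * gker m x / sq).
  { unfold Rdiv. apply Rmult_le_pos. apply pos3; lra.
  left; apply Rinv_0_lt_compat; lra. }
  assert (weight M mu i x * x * gker m x / sq = - (weight M mu i x * (- x) * gker m x / sq)) by (field; lra).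
  lra. Qed.

Lemma xgker_bound m x : 0 <= x -> x * gker m x <= exp (2*m+2) * exp (-x).
Proof. intros Hx. pose proof (exp_ineq1_le x). pose proof (gker_pos m x).
  assert (x * gker m x <= exp x * gker m x) by (apply Rmult_le_compat_r; lra).
  assert (exp x * gker m x <= exp (2*m+2) * exp (-x)).
  { unfold gker. rewrite <- !exp_plus. apply expl. pose proof (pow2_ge_0 (x-m-2)). nra. }
  lra. Qed.

Lemma f_upper M mu i m x : (i < M)%nat -> 0 <= x ->
  integrand M mu i m x <= exp (2*m+2) / sq * exp (-x).
Proof. intros H Hx. rewrite f_eq. pose proof (weight_bounds M mu i x H). pose proof (gker_pos m x).
  pose proof sq_pos. pose proof (xgker_bound m x Hx).
  assert (weight M mu i x * (x * gker m x) <= x * gker m x).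
  { rewrite <- (Rmult_1_l (x * gker m x)) at 2. apply Rmult_le_compat_r. apply Rmult_le_pos; lra. lra. }
  unfold Rdiv. replace (weight M mu i x * x * gker m x * / sq) with ((weight M mu i x * (x * gker m x)) * / sq) by ring.
  replace (exp (2 * m + 2) * / sq * exp (- x)) with ((exp (2 * m + 2) * exp (- x)) * / sq) by ring.
  apply Rmult_le_compat_r. left; apply Rinv_0_lt_compat; lra. lra. Qed.

Lemma f_neg_lower M mu i m s x : (i < M)%nat -> 0 <= m -> 0 <= s -> x <= 0 -> weight M mu i x <= s ->
  s * ((x - m) * gker m x) / sq <= integrand M mu i m x.
Proof. intros H Hm Hs Hx Hw. rewrite f_eq. pose proof (weight_bounds M mu i x H). pose proof (gker_pos m x).
  pose proof sq_pos. unfold Rdiv. apply Rmult_le_compat_r. left; apply Rinv_0_lt_compat; lra.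
  rewrite <- Rmult_assoc. apply Rmult_le_compat_r. lra. nra. Qed.

Lemma f_L1 M mu i m s y : (i < M)%nat -> 3 <= m -> 0 <= s ->
  m/2 - 1/2 < y < m/2 + 1/2 -> s <= (INR M + 1) * exp (y^2/2) * weight M mu i y ->
  s * exp (-1/4 - m^2/4) / ((INR M + 1) * sq) <= integrand M mu i m y.
Proof. intros H Hm Hs Hy Hw. rewrite f_eq. pose proof (weight_bounds M mu i y H). pose proof (gker_pos m y).
  pose proof sq_pos. pose proof (pos_INR M). pose proof (exp_pos (y^2/2)).
  assert (Hg : exp (-1/4 - m^2/4) * exp (y^2/2) <= gker m y).
  { unfold gker. rewrite <- exp_plus. apply expl. nra. }
  set (w := weight M mu i y) in *. set (e := exp (y^2/2)) in *.
  assert (Hk : 0 < (INR M + 1) * e) by nra.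
  assert (s / ((INR M + 1) * e) <= w).
  { apply Rmult_le_reg_r with ((INR M + 1) * e). lra. unfold Rdiv. rewrite Rmult_assoc, Rinv_l; lra. }
  pose proof (exp_pos (-1/4 - m^2/4)) as HE0. set (E0 := exp (-1/4 - m^2/4)) in *.
  assert (A1 : w * gker m y <= w * y * gker m y).
  { assert (0 <= w * gker m y) by (apply Rmult_le_pos; lra). nra. }
  assert (A2 : s / ((INR M + 1) * e) * (E0 * e) <= w * gker m y).
  { apply Rmult_le_compat; try lra. unfold Rdiv. apply Rmult_le_pos. lra. left; apply Rinv_0_lt_compat; lra.
    apply Rmult_le_pos; lra. }
  assert (A3 : s / ((INR M + 1) * e) * (E0 * e) = s * E0 / (INR M + 1)) by (field; lra).
  replace (s * E0 / ((INR M + 1) * sq)) with ((s * E0 / (INR M + 1)) / sq) by (field; lra).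
  unfold Rdiv at 1 3. apply Rmult_le_compat_r. left; apply Rinv_0_lt_compat; lra. lra.
Qed.

Lemma f_L2 M mu i m a y : (1 <= M)%nat -> (i < M)%nat -> 3 <= a -> 0 <= mu i ->
  (m - mu i)^2 <= 9 * a^2 -> (mu i + m)/2 - 1/2 < y < (mu i + m)/2 + 1/2 -> a <= m ->
  (a/2 - 1/2) * exp (-1/4 - 9 * a^2/4) / (INR M * sq) <= integrand M mu i m y.
Proof. intros H1 H Ha Hmu Hd Hy Hm. rewrite f_eq. pose proof (weight_lower M mu i y H1 H).
  pose proof (gker_pos m y). pose proof (gker_pos (mu i) y).
  pose proof sq_pos. assert (HM : 1 <= INR M) by (apply (le_INR 1); auto).
  assert (Hg : exp (-1/4 - 9 * a^2/4) <= gker (mu i) y * gker m y).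
  { unfold gker. rewrite <- exp_plus. apply expl. nra. }
  pose proof (exp_pos (-1/4 - 9 * a^2/4)) as HE0. set (E0 := exp (-1/4 - 9 * a^2/4)) in *.
  set (w := weight M mu i y) in *.
  assert (A1 : (a/2 - 1/2) * (gker (mu i) y / INR M * gker m y) <= w * y * gker m y).
  { assert (0 <= gker (mu i) y / INR M) by (unfold Rdiv; apply Rmult_le_pos; [lra| left; apply Rinv_0_lt_compat; lra]).
    assert (gker (mu i) y / INR M * gker m y <= w * gker m y) by (apply Rmult_le_compat_r; lra).
    assert (0 <= w * gker m y) by (apply Rmult_le_pos; lra).
    assert (0 <= gker (mu i) y / INR M * gker m y) by (apply Rmult_le_pos; lra).
    nra. }
  assert (A2 : (a/2 - 1/2) * E0 / INR M <= (a/2 - 1/2) * (gker (mu i) y / INR M * gker m y)).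
  { replace ((a/2 - 1/2) * (gker (mu i) y / INR M * gker m y)) with ((a/2 - 1/2) * (gker (mu i) y * gker m y) / INR M) by (field; lra).
    unfold Rdiv. apply Rmult_le_compat_r. left; apply Rinv_0_lt_compat; lra. apply Rmult_le_compat_l; lra. }
  replace ((a/2 - 1/2) * E0 / (INR M * sq)) with (((a/2 - 1/2) * E0 / INR M) / sq) by (field; lra).
  unfold Rdiv at 1 3. apply Rmult_le_compat_r. left; apply Rinv_0_lt_compat; lra. lra.
Qed.

Lemma RInt_lower (f : R -> R) a b L : a <= b -> ex_RInt f a b ->
  (forall x, a < x < b -> L <= f x) -> (b - a) * L <= RInt f a b.
Proof. intros Hab Hex H.
  assert (RInt (fun _ => L) a b <= RInt f a b).
  { apply RInt_le; auto. apply ex_RInt_const. }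
  rewrite RInt_const in H0. exact H0. Qed.

Lemma RInt_upper (f : R -> R) a b L : a <= b -> ex_RInt f a b ->
  (forall x, a < x < b -> f x <= L) -> RInt f a b <= (b - a) * L.
Proof. intros Hab Hex H.
  assert (RInt f a b <= RInt (fun _ => L) a b).
  { apply RInt_le; auto. apply ex_RInt_const. }
  rewrite RInt_const in H0. exact H0. Qed.

Lemma cont_h m x : continuous (fun x => (x - m) * gker m x) x.
Proof. apply continuity_pt_filterlim.
  apply (continuity_pt_mult (fun x => x - m) (gker m)).
  apply (continuity_pt_minus (fun x => x) (fun _ => m)). apply continuity_pt_id. apply continuity_pt_const. intros ? ?; auto.
  apply cont_gker. Qed.

Lemma RInt_h m A : RInt (fun x => (x - m) * gker m x) (-A) 0 = gker m (-A) - gker m 0.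
Proof.
  apply is_RInt_unique.
  replace (gker m (-A) - gker m 0) with (minus ((fun x => - gker m x) 0) ((fun x => - gker m x) (-A))).
  2:{ unfold minus, plus, opp; simpl. ring. }
  apply (@is_RInt_derive R_CompleteNormedModule (fun x => - gker m x)). intros x _. unfold gker. auto_derive. auto. replace (- ((x + - m) * ((x + - m) * 1)) * / 2) with (- (x - m) ^ 2 / 2) by field. field.
  intros x _. apply cont_h.
Qed.

Lemma cont_e C x : continuous (fun x => C * exp (- x)) x.
Proof. apply continuity_pt_filterlim. apply derivable_continuous_pt.
  apply (derivable_pt_mult (fun _ => C) (fun x => exp (-x))). apply derivable_pt_const.
  apply (derivable_pt_comp (fun x => -x) exp). apply derivable_pt_opp. apply derivable_pt_id. apply derivable_pt_exp. Qed.

Lemma is_RInt_e C B : is_RInt (fun x => C * exp (- x)) 0 B (C * (1 - exp (- B))).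
Proof.
  replace (C * (1 - exp (- B))) with (minus ((fun x => - C * exp (- x)) B) ((fun x => - C * exp (- x)) 0)).
  2:{ unfold minus, plus, opp; simpl. rewrite Ropp_0, exp_0. ring. }
  apply (@is_RInt_derive R_CompleteNormedModule (fun x => - C * exp (- x))). intros x _. auto_derive. auto. ring.
  intros x _. apply cont_e.
Qed.

Lemma keyineq M m : (1 <= M)%nat -> ln (INR M) + 3 < m ->
  2 * (INR M + 1) * exp (- m^2/2) <= exp (-1/4 - m^2/4).
Proof. intros HM Hm. assert (HM1 : 1 <= INR M) by (apply (le_INR 1); auto).
  assert (HL : 0 <= ln (INR M)). { destruct HM1 as [H|H]. rewrite <- ln_1. left; apply ln_increasing; lra. rewrite <- H, ln_1; lra. }
  set (L := ln (INR M)) in *.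
  assert (He1 : 2 <= exp 1) by (pose proof (exp_ineq1_le 1); lra).
  assert (He2 : exp (2 + L) = exp 1 * exp 1 * INR M). { rewrite exp_plus. unfold L. rewrite exp_ln by lra. rewrite <- exp_plus. replace (1+1) with 2 by ring. auto. }
  assert (H1 : exp (2 + L) <= exp (-1/4 - m^2/4 + m^2/2)). { apply expl. nra. }
  replace (exp (-1/4 - m^2/4)) with (exp (-1/4 - m^2/4 + m^2/2) * exp (- m^2/2)).
  2:{ rewrite <- exp_plus. f_equal. field. }
  pose proof (exp_pos (- m^2/2)). apply Rmult_le_compat_r. lra.
  rewrite He2 in H1. assert (4 <= exp 1 * exp 1) by nra. assert (4 * INR M <= exp 1 * exp 1 * INR M) by (apply Rmult_le_compat_r; lra). lra.
Qed.

Lemma finalineq M a : (1 <= M)%nat -> 3 <= a ->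
  a / (5 * INR M) * exp (- 9 * a ^ 2 / 2) <= ((a/2 - 1/2) * exp (-1/4 - 9 * a^2/4) / (INR M * sq)) / 2.
Proof. intros HM Ha. assert (HM1 : 1 <= INR M) by (apply (le_INR 1); auto).
  pose proof sq_pos. pose proof sq_le3.
  replace (exp (-1/4 - 9 * a^2/4)) with (exp (9*a^2/4 - 1/4) * exp (- 9 * a ^ 2 / 2)).
  2:{ rewrite <- exp_plus. f_equal. field. }
  pose proof (exp_ineq1_le (9*a^2/4 - 1/4)). pose proof (exp_pos (- 9 * a ^ 2 / 2)).
  set (E := exp (- 9 * a ^ 2 / 2)) in *. set (Q := exp (9*a^2/4 - 1/4)) in *.
  assert (HQ : 21 <= Q) by nra.
  apply Rmult_le_reg_r with (2 * INR M * sq). nra.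
  replace (a / (5 * INR M) * E * (2 * INR M * sq)) with (2 * a * sq * E / 5) by (field; lra).
  replace ((a / 2 - 1 / 2) * (Q * E) / (INR M * sq) / 2 * (2 * INR M * sq)) with ((a / 2 - 1 / 2) * Q * E) by (field; lra).
  assert (2 * a * sq / 5 <= (a / 2 - 1 / 2) * Q) by nra.
  nra.
Qed.

Lemma chasles (f : R -> R) a b c : ex_RInt f a b -> ex_RInt f b c -> RInt f a c = RInt f a b + RInt f b c.
Proof. intros H1 H2. rewrite <- (RInt_Chasles f a b c H1 H2). reflexivity. Qed.

Lemma lub_approx (P : R -> Prop) l eps : is_lub P l -> 0 < eps -> exists z, P z /\ l - eps < z.
Proof. intros [Hu Hl] He. destruct (classic (exists z, P z /\ l - eps < z)) as [H|Hn]; auto.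
  exfalso. assert (l <= l - eps). { apply Hl. intros z Hz. apply Rnot_lt_le. intro. apply Hn. eauto. } lra. Qed.

Theorem lemma5 (M : nat) (a mustar : R) (mu : nat -> R) (i : nat) :
  (1 <= M)%nat ->
  ln (INR M) + 3 < a ->
  a <= mustar ->
  (i < M)%nat ->
  0 <= mu i ->
  (exists E, improper_int (integrand M mu i mustar) E /\ 0 <= E) /\
  (mustar <= 3 * a -> mu i <= 4 * a ->
   exists E, improper_int (integrand M mu i mustar) E /\
             a / (5 * INR M) * exp (- 9 * a ^ 2 / 2) <= E).
Proof.
  intros HM Ha Hm Hi Hmu.
  assert (HM1 : 1 <= INR M) by (apply (le_INR 1); auto).
  assert (HL : 0 <= ln (INR M)). { destruct HM1 as [H|H]. rewrite <- ln_1. left; apply ln_increasing; lra. rewrite <- H, ln_1; lra. }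
  assert (Ha3 : 3 <= a) by lra.
  set (m := mustar) in *. set (f := integrand M mu i m).
  assert (Hex : forall u v, ex_RInt f u v) by (intros; apply exRI_f; auto).
  pose proof sq_pos as Hsq.
  destruct (completeness (fun z => exists x, x <= 0 /\ z = weight M mu i x)) as [s [Hub Hleast]].
  { exists 1. intros z [x [_ ->]]. apply (weight_bounds M mu i x Hi). }
  { exists (weight M mu i 0). exists 0. split; auto; lra. }
  assert (Hs1 : forall x, x <= 0 -> weight M mu i x <= s) by (intros x Hx; apply Hub; eauto).
  assert (Hs2 : forall y, 0 <= y -> s <= (INR M + 1) * exp (y^2/2) * weight M mu i y).
  { intros y Hy. apply Hleast. intros z [x [Hx ->]]. apply W2; auto. }
  assert (Hs0 : 0 <= s). { pose proof (Hs1 0 (Rle_refl 0)). pose proof (weight_bounds M mu i 0 Hi). lra. }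
  set (F := fun B => RInt f 0 B). set (G := fun A => RInt f (-A) 0).
  assert (HFmono : forall B B', 0 <= B -> B <= B' -> F B <= F B').
  { intros B B' H0 H1. unfold F. rewrite (chasles f 0 B B'); auto.
    assert ((B' - B) * 0 <= RInt f B B'). { apply RInt_lower; auto. intros; apply f_nonneg; auto; lra. } lra. }
  set (C0 := exp (2*m+2) / sq).
  assert (HFbound : forall B, 0 <= B -> F B <= C0).
  { intros B HB. unfold F. 
    assert (RInt f 0 B <= RInt (fun x => C0 * exp (- x)) 0 B).
    { apply RInt_le; auto. eexists; apply is_RInt_e. intros; apply f_upper; auto; lra. }
    rewrite (is_RInt_unique _ _ _ _ (is_RInt_e C0 B)) in H.
    pose proof (exp_pos (-B)). assert (0 <= C0) by (unfold C0; unfold Rdiv; apply Rmult_le_pos; [left; apply exp_pos| left; apply Rinv_0_lt_compat; lra]).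
    nra. }
  assert (HGmono : forall A A', 0 <= A -> A <= A' -> G A' <= G A).
  { intros A A' H0 H1. unfold G. rewrite (chasles f (-A') (-A) 0); auto.
    assert (RInt f (-A') (-A) <= ((-A) - (-A')) * 0). { apply RInt_upper; auto. lra. intros; apply f_nonpos; auto; lra. } lra. }
  set (X := s * gker m 0 / sq).
  assert (HX : 0 <= X). { unfold X, Rdiv. pose proof (gker_pos m 0). apply Rmult_le_pos. apply Rmult_le_pos; lra. left; apply Rinv_0_lt_compat; lra. }
  assert (HGbound : forall A, 0 <= A -> - X <= G A).
  { intros A HA. unfold G.
    assert (RInt (fun x => (s / sq) * ((x - m) * gker m x)) (-A) 0 <= RInt f (-A) 0).
    { apply RInt_le; auto. lra. apply (ex_RInt_scal (fun x => (x - m) * gker m x)).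
      apply (@ex_RInt_continuous R_CompleteNormedModule). intros; apply cont_h.
      intros x Hx. replace (s / sq * ((x - m) * gker m x)) with (s * ((x - m) * gker m x) / sq) by (field; lra).
      apply f_neg_lower; auto; try lra. apply Hs1; lra. }
    rewrite (RInt_scal (fun x => (x - m) * gker m x)) in H.
    2:{ apply (@ex_RInt_continuous R_CompleteNormedModule). intros; apply cont_h. }
    rewrite RInt_h in H. unfold scal in H; simpl in H. unfold mult in H; simpl in H.
    pose proof (gker_pos m (-A)). unfold X.
    assert (s / sq * gker m (-A) >= 0). { unfold Rdiv. apply Rle_ge. apply Rmult_le_pos; [apply Rmult_le_pos|]; try lra. left; apply Rinv_0_lt_compat; lra. }
    replace (s * gker m 0 / sq) with (s / sq * gker m 0) by (field; lra). nra. }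
  destruct (completeness (fun z => exists B, 0 <= B /\ z = F B)) as [Pinf HPinf].
  { exists C0. intros z [B [HB ->]]. auto. }
  { exists (F 0). exists 0. split; auto; lra. }
  destruct (completeness (fun z => exists A, 0 <= A /\ z = - G A)) as [Gs HGs].
  { exists X. intros z [A [HA ->]]. pose proof (HGbound A HA). lra. }
  { exists (- G 0). exists 0. split; auto; lra. }
  assert (HP1 : forall B, 0 <= B -> F B <= Pinf) by (intros B HB; apply (proj1 HPinf); eauto).
  assert (HG1 : Gs <= X). { apply (proj2 HGs). intros z [A [HA ->]]. pose proof (HGbound A HA). lra. }
  assert (Himp : improper_int f (Pinf - Gs)).
  { intros eps Heps.
    destruct (lub_approx _ _ (eps/2) HPinf) as [z1 [[B0 [HB0 ->]] Hz1]]. lra.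
    destruct (lub_approx _ _ (eps/2) HGs) as [z2 [[A0 [HA0 ->]] Hz2]]. lra.
    exists (Rmax B0 A0). intros A B HA HB.
    assert (HB0' : B0 <= B) by (eapply Rle_trans; [apply Rmax_l|exact HB]).
    assert (HA0' : A0 <= A) by (eapply Rle_trans; [apply Rmax_r|exact HA]).
    exists (ex_RInt_Reals_0 _ _ _ (Hex (-A) B)). rewrite <- RInt_Reals.
    rewrite (chasles f (-A) 0 B); auto. fold (G A). fold (F B).
    pose proof (HFmono B0 B HB0 HB0'). pose proof (HP1 B ltac:(lra)).
    pose proof (HGmono A0 A HA0 HA0').
    assert (- G A <= Gs) by (apply (proj1 HGs); exists A; split; auto; lra).
    apply Rabs_def1; lra. }
  assert (Hlow : forall lo hi Lv, 0 <= lo -> lo <= hi -> (forall y, lo < y < hi -> Lv <= f y) -> (hi - lo) * Lv <= F hi).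
  { intros lo hi Lv H0 H1 H2. unfold F. rewrite (chasles f 0 lo hi); auto.
    assert ((lo - 0) * 0 <= RInt f 0 lo). { apply RInt_lower; auto. intros; apply f_nonneg; auto; lra. }
    assert ((hi - lo) * Lv <= RInt f lo hi) by (apply RInt_lower; auto). lra. }
  set (L1 := s * exp (-1/4 - m^2/4) / ((INR M + 1) * sq)).
  assert (HL1 : L1 <= F (m/2 + 1/2)).
  { replace L1 with ((m/2 + 1/2 - (m/2 - 1/2)) * L1) by field. apply Hlow. lra. lra.
    intros y Hy. apply f_L1; auto; try lra. apply Hs2; lra. }
  assert (HL1X : 2 * X <= L1).
  { pose proof (keyineq M m HM ltac:(lra)). unfold X, L1, gker. replace (- (0 - m) ^ 2 / 2) with (- m^2/2) by field.
    apply Rmult_le_reg_r with ((INR M + 1) * sq). nra.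
    replace (2 * (s * exp (- m ^ 2 / 2) / sq) * ((INR M + 1) * sq)) with (s * (2 * (INR M + 1) * exp (- m^2/2))) by (field; lra).
    replace (s * exp (-1/4 - m^2/4) / ((INR M + 1) * sq) * ((INR M + 1) * sq)) with (s * exp (-1/4 - m^2/4)) by (field; lra).
    apply Rmult_le_compat_l; lra. }
  assert (HPL1 : L1 <= Pinf) by (eapply Rle_trans; [exact HL1| apply HP1; lra]).
  split.
  - exists (Pinf - Gs). split; auto. lra.
  - intros Hm3 Hmu4. exists (Pinf - Gs). split; auto.
    set (c2 := (mu i + m)/2).
    set (L2 := (a/2 - 1/2) * exp (-1/4 - 9 * a^2/4) / (INR M * sq)).
    assert (HL2 : L2 <= F (c2 + 1/2)).
    { replace L2 with ((c2 + 1/2 - (c2 - 1/2)) * L2) by field. apply Hlow. unfold c2; lra. lra.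
      intros y Hy. apply f_L2; auto; try lra. nra. }
    assert (HPL2 : L2 <= Pinf) by (eapply Rle_trans; [exact HL2| apply HP1; unfold c2; lra]).
    pose proof (finalineq M a HM Ha3). fold L2 in H. lra.
Qed.
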